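(* Let $\alpha_1,\alpha_2,\alpha_3,\beta_1,\beta_2,\beta_3,\beta_4,\gamma_1,\gamma_2,\gamma_3,\gamma_4$ be positive real constants satisfying $$\alpha_1+\alpha_2+\alpha_3=\beta_1-\beta_4=\gamma_1-\gamma_4.$$ Set $A_4=\alpha_1-(\gamma_1-\gamma_4)-\gamma_2$, $A_5=\beta_2-\gamma_2$, $A_6=\alpha_2-\gamma_3$, $A_7=(\beta_1-\beta_2-\beta_3-\beta_4)-(\gamma_1-\gamma_4)-\gamma_3$, and consider the planar linear system $$\frac{dx_0}{dt}=A_4x_0+A_5x_1+\gamma_2,\qquad \frac{dx_1}{dt}=A_6x_0+A_7x_1+\gamma_3.$$ Then this system has a unique fixed point $E=(x_0^*,x_1^* )$, it is stable, and $$x_0^*=\frac{A_5\gamma_3-A_7\gamma_2}{A_4A_7-A_5A_6}>0,\qquad x_1^*=\frac{A_6\gamma_2-A_4\gamma_3}{A_4A_7-A_5A_6}>0.$$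
   Context: This is the ''reversible model'' for the proportions $x_0,x_1$ (and $x_2=1-x_0-x_1$) of three cancer cell phenotypes (CSC$_0$, NSCC$_1$, NSCC$_2$) in the special case where the per capita growth rate of the total population due to each phenotype is the same. The parameters are rates: $\alpha_1$ (CSC symmetric division), $\alpha_2,\alpha_3$ (asymmetric CSC division producing NSCC$_1$, NSCC$_2$), $\beta_1,\gamma_1$ (NSCC divisions), $\beta_2,\gamma_2$ (de-differentiation to CSC), $\beta_3,\gamma_3$ (interconversion between NSCC$_1$ and NSCC$_2$), $\beta_4,\gamma_4$ (death). ''Stable'' means the fixed point is asymptotically stable (both eigenvalues of the linearization have negative real part). *)

(* Defs.v *)
From HB Require Import structures.
From mathcomp Require Import all_boot all_order all_algebra.
From mathcomp Require Import complex.
Set Implicit Arguments. Unset Strict Implicit. Unset Printing Implicit Defensive.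
Import Order.TTheory GRing.Theory Num.Theory.
Local Open Scope ring_scope.

Definition vfield (R : rcfType) (A4 A5 A6 A7 g2 g3 : R) (x : R * R) : R * R :=
  (A4 * x.1 + A5 * x.2 + g2, A6 * x.1 + A7 * x.2 + g3).

Definition is_fixed_point (R : rcfType) (A4 A5 A6 A7 g2 g3 : R) (x : R * R) : Prop :=
  vfield A4 A5 A6 A7 g2 g3 x = (0, 0).

(* Jacobian (linearization) of the system; constant since the system is linear. *)
Definition jac (R : rcfType) (A4 A5 A6 A7 : R) : 'M[R]_2 :=
  \matrix_(i < 2, j < 2)
     (if i == 0 :> nat then (if j == 0 :> nat then A4 else A5)
                       else (if j == 0 :> nat then A6 else A7)).

Definition asympt_stable (R : rcfType) (A4 A5 A6 A7 : R) (E : R * R) : Prop :=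
  forall lambda : R[i],
    eigenvalue (map_mx (fun r : R => (r%:C)%C) (jac A4 A5 A6 A7)) lambda ->
    complex.Re lambda < 0.

(* Main.v *)
Require Import Defs.
From HB Require Import structures.
From mathcomp Require Import all_boot all_order all_algebra.
From mathcomp Require Import complex ring lra.
Import Order.TTheory GRing.Theory Num.Theory.
Local Open Scope ring_scope.

Lemma eig2 (R : rcfType) (p q r s : R) (l : R[i]) :
  eigenvalue (map_mx (fun x : R => (x%:C)%C) (jac p q r s)) l ->
  ((p%:C)%C - l) * ((s%:C)%C - l) - (q%:C)%C * (r%:C)%C = 0 :> R[i].
Proof.
move/eigenvalueP => [v Hv vnz].
have E0 := congr1 (fun M : 'M[R[i]]_(1,2) => M 0 0) Hv.
have E1 := congr1 (fun M : 'M[R[i]]_(1,2) => M 0 1) Hv.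
move: E0 E1; rewrite !mxE /= !big_ord_recr /= big_ord0 !mxE /= add0r.
set v0 := v 0 0; set v1 := v 0 1.
have -> : (v 0 (@ord_max 1)) = v1 by congr (v _ _); apply/val_inj.
have -> : (v 0 (widen_ord (leqnSn 1) ord_max)) = v0 by congr (v _ _); apply/val_inj.
rewrite big_ord0 add0r.
move=> /eqP; rewrite -subr_eq0 => /eqP E0.
move=> /eqP; rewrite -subr_eq0 => /eqP E1.
set D := _ - _.
have h0 : v0 * D = 0.
  transitivity (((s%:C)%C - l) * (v0 * (p%:C)%C + v1 * (r%:C)%C - l * v0)
     - (r%:C)%C * (v0 * (q%:C)%C + v1 * (s%:C)%C - l * v1)); first by rewrite /D; ring.
  by rewrite E0 E1; ring.
have h1 : v1 * D = 0.
  transitivity (((p%:C)%C - l) * (v0 * (q%:C)%C + v1 * (s%:C)%C - l * v1)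
     - (q%:C)%C * (v0 * (p%:C)%C + v1 * (r%:C)%C - l * v0)); first by rewrite /D; ring.
  by rewrite E0 E1; ring.
apply/eqP; apply: contraT => Dnz.
case/eqP: vnz; apply/rowP => j; rewrite mxE.
case: j => [[|[|//]] Hj].
  have -> : Ordinal Hj = 0 by apply/val_inj.
  by apply/eqP; move: h0; rewrite -/v0 => /eqP; rewrite mulf_eq0 (negPf Dnz) orbF.
have -> : Ordinal Hj = 1 by apply/val_inj.
by apply/eqP; move: h1; rewrite -/v1 => /eqP; rewrite mulf_eq0 (negPf Dnz) orbF.
Qed.
Lemma stab2 (R : rcfType) (p q r s : R) (l : R[i]) :
  p + s < 0 -> 0 < p * s - q * r ->
  ((p%:C)%C - l) * ((s%:C)%C - l) - (q%:C)%C * (r%:C)%C = 0 :> R[i] ->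
  complex.Re l < 0.
Proof.
move=> ht hd; case: l => x y /=.
move/eqP; rewrite eq_complex /= => /andP [/eqP H1 /eqP H2].
have : y * (p + s - 2 * x) = 0.
  by rewrite -oppr0 -H2; ring.
move/eqP; rewrite mulf_eq0 => /orP [/eqP y0|/eqP e].
  rewrite y0 in H1; rewrite ltNge; apply/negP => hx; nra.
lra.
Qed.
Theorem theorem1 (R : rcfType)
  (a1 a2 a3 b1 b2 b3 b4 g1 g2 g3 g4 : R)
  (ha1 : 0 < a1) (ha2 : 0 < a2) (ha3 : 0 < a3)
  (hb1 : 0 < b1) (hb2 : 0 < b2) (hb3 : 0 < b3) (hb4 : 0 < b4)
  (hg1 : 0 < g1) (hg2 : 0 < g2) (hg3 : 0 < g3) (hg4 : 0 < g4)
  (h1 : a1 + a2 + a3 = b1 - b4) (h2 : b1 - b4 = g1 - g4) :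
  let A4 := a1 - (g1 - g4) - g2 in
  let A5 := b2 - g2 in
  let A6 := a2 - g3 in
  let A7 := (b1 - b2 - b3 - b4) - (g1 - g4) - g3 in
  let x0s := (A5 * g3 - A7 * g2) / (A4 * A7 - A5 * A6) in
  let x1s := (A6 * g2 - A4 * g3) / (A4 * A7 - A5 * A6) in
  (forall E : R * R, is_fixed_point A4 A5 A6 A7 g2 g3 E <-> E = (x0s, x1s))
  /\ asympt_stable A4 A5 A6 A7 (x0s, x1s)
  /\ 0 < x0s /\ 0 < x1s.
Proof.
move=> A4 A5 A6 A7 x0s x1s.
have eA4 : A4 = -(a2 + a3 + g2) by rewrite /A4 -h2 -h1; ring.
have eA7 : A7 = -(b2 + b3 + g3) by rewrite /A7 -h2; ring.
have hD : 0 < A4 * A7 - A5 * A6.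
  rewrite eA4 eA7 /A5 /A6.
  have -> : (-(a2 + a3 + g2)) * (-(b2 + b3 + g3)) - (b2 - g2) * (a2 - g3)
    = a2*b3 + a2*g3 + a3*(b2+b3+g3) + g2*b2 + g2*b3 + b2*g3 + a2*g2 by ring.
  have := mulr_gt0 ha2 hb3; have := mulr_gt0 ha2 hg3; have := mulr_gt0 ha3 hb2;
  have := mulr_gt0 ha3 hb3; have := mulr_gt0 ha3 hg3; have := mulr_gt0 hg2 hb2;
  have := mulr_gt0 hg2 hb3; have := mulr_gt0 hb2 hg3; have := mulr_gt0 ha2 hg2.
  lra.
have Dnz : A4 * A7 - A5 * A6 != 0 by rewrite gt_eqF.
have hN0 : 0 < A5 * g3 - A7 * g2.
  rewrite eA7 /A5.
  have -> : (b2 - g2) * g3 - (-(b2 + b3 + g3)) * g2 = b2*g3 + b2*g2 + b3*g2 by ring.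
  have := mulr_gt0 hb2 hg3; have := mulr_gt0 hb2 hg2; have := mulr_gt0 hb3 hg2.
  lra.
have hN1 : 0 < A6 * g2 - A4 * g3.
  rewrite eA4 /A6.
  have -> : (a2 - g3) * g2 - (-(a2 + a3 + g2)) * g3 = a2*g2 + a2*g3 + a3*g3 by ring.
  have := mulr_gt0 ha2 hg2; have := mulr_gt0 ha2 hg3; have := mulr_gt0 ha3 hg3.
  lra.
split; last split; last split.
- case=> u w; rewrite /is_fixed_point /vfield /=; split.
    case=> e1 e2; congr pair.
      apply/(mulIf Dnz); rewrite /x0s divfK //.
      transitivity (A7 * (A4 * u + A5 * w + g2) - A5 * (A6 * u + A7 * w + g3)
                    + (A5 * g3 - A7 * g2)); first ring.
      by rewrite e1 e2; ring.
    apply/(mulIf Dnz); rewrite /x1s divfK //.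
    transitivity (A4 * (A6 * u + A7 * w + g3) - A6 * (A4 * u + A5 * w + g2)
                  + (A6 * g2 - A4 * g3)); first ring.
    by rewrite e1 e2; ring.
  case=> -> ->; rewrite /x0s /x1s; congr pair; field; exact: Dnz.
- move=> l /eig2; apply: stab2 => //; rewrite eA4 eA7; lra.
- by apply: divr_gt0.
- by apply: divr_gt0.
Qed.
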